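(* Let $\omega>0$, $T=2\pi/\omega$, and let $H(t)=\begin{pmatrix} a(t) & b(t)\\ b^*(t) & c(t)\end{pmatrix}$ be a continuous $T$-periodic family of $2\times 2$ Hermitian matrices (so $a,c$ real-valued) such that $[H(t),G(t)]=0$ for all $t$, where $G(t)=\begin{pmatrix}0 & e^{-i\omega t}\\ 1 & 0\end{pmatrix}$. Then $a(t)=c(t)$ and $b(t)=b^*(t)e^{-i\omega t}$ for all $t$, and there exists $t$ with $b(t)=0$; in particular the two instantaneous eigenvalues of $H(t)$ coincide at some time $t$ (the spectrum is gapless). *)

(* Defs.v *)
From Stdlib Require Import Reals.
From Coquelicot Require Import Coquelicot.
Open Scope R_scope.

Record M2 := mkM2 { m11 : C; m12 : C; m21 : C; m22 : C }.

Definition M2mul (A B : M2) : M2 :=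
  mkM2 (Cplus (Cmult (m11 A) (m11 B)) (Cmult (m12 A) (m21 B)))
       (Cplus (Cmult (m11 A) (m12 B)) (Cmult (m12 A) (m22 B)))
       (Cplus (Cmult (m21 A) (m11 B)) (Cmult (m22 A) (m21 B)))
       (Cplus (Cmult (m21 A) (m12 B)) (Cmult (m22 A) (m22 B))).

Definition M2comm (A B : M2) : M2 :=
  let P := M2mul A B in let Q := M2mul B A in
  mkM2 (Cminus (m11 P) (m11 Q)) (Cminus (m12 P) (m12 Q))
       (Cminus (m21 P) (m21 Q)) (Cminus (m22 P) (m22 Q)).

Definition M2zero : M2 := mkM2 (RtoC 0) (RtoC 0) (RtoC 0) (RtoC 0).

Definition M2det (A : M2) : C :=
  Cminus (Cmult (m11 A) (m22 A)) (Cmult (m12 A) (m21 A)).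

Definition M2shift (A : M2) (mu : C) : M2 :=
  mkM2 (Cminus (m11 A) mu) (m12 A) (m21 A) (Cminus (m22 A) mu).

Definition Cexpi (theta : R) : C := (cos theta, sin theta).

Definition Hmat (a c : R -> R) (b : R -> C) (t : R) : M2 :=
  mkM2 (RtoC (a t)) (b t) (Cconj (b t)) (RtoC (c t)).

Definition Gmat (omega t : R) : M2 :=
  mkM2 (RtoC 0) (Cexpi (- (omega * t))) (RtoC 1) (RtoC 0).

(* the two eigenvalues of A coincide: the characteristic polynomial
   det(A - mu I) is (lambda - mu)^2 for some lambda *)
Definition degenerate_spectrum (A : M2) : Prop :=
  exists lam : C, forall mu : C,
    M2det (M2shift A mu) = Cmult (Cminus lam mu) (Cminus lam mu).

(* Main.v *)
Require Import Defs.
From Stdlib Require Import Reals Lra.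
From Coquelicot Require Import Coquelicot.
Open Scope R_scope.

Lemma comm_eqs (omega : R) (a c : R -> R) (b : R -> C) t :
  M2comm (Hmat a c b t) (Gmat omega t) = M2zero ->
  a t = c t /\ b t = Cmult (Cconj (b t)) (Cexpi (- (omega * t))).
Proof.
  unfold M2comm, M2mul, Hmat, Gmat, M2zero, Cexpi; simpl.
  destruct (b t) as [x y]. intros H. injection H.
  unfold Cminus, Cplus, Cmult, Copp, Cconj, RtoC; simpl.
  set (co := cos (- (omega * t))). set (si := sin (- (omega * t))).
  assert (Hcs : co * co + si * si = 1).
  { unfold co, si. pose proof (sin2_cos2 (- (omega * t))). unfold Rsqr in *. lra. }
  intros.
  split; [lra | f_equal; lra].
Qed.

Theorem mainTheorem3 (omega : R) (a c : R -> R) (b : R -> C) :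
  0 < omega ->
  (forall t, continuous a t) ->
  (forall t, continuous c t) ->
  (forall t, continuous b t) ->
  (forall t, a (t + 2 * PI / omega) = a t) ->
  (forall t, c (t + 2 * PI / omega) = c t) ->
  (forall t, b (t + 2 * PI / omega) = b t) ->
  (forall t, M2comm (Hmat a c b t) (Gmat omega t) = M2zero) ->
  (forall t, a t = c t /\ b t = Cmult (Cconj (b t)) (Cexpi (- (omega * t)))) /\
  (exists t, b t = RtoC 0 /\ degenerate_spectrum (Hmat a c b t)).
Proof.
  intros Hom Ha Hc Hb Pa Pc Pb Hcomm.
  assert (Rel : forall t, a t = c t /\ b t = Cmult (Cconj (b t)) (Cexpi (- (omega * t))))
    by (intro t; apply comm_eqs; apply Hcomm).
  split; [exact Rel|].
  set (psi := fun t => - (omega * t) / 2).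
  set (f := fun t => fst (b t) * cos (psi t) + snd (b t) * sin (psi t)).
  set (q := fun t => fst (b t) * sin (psi t) - snd (b t) * cos (psi t)).
  assert (Q0 : forall t, q t = 0).
  { intro t. destruct (Rel t) as [_ E]. unfold q.
    unfold Cexpi, Cmult, Cconj in E.
    replace (- (omega * t)) with (2 * psi t) in E by (unfold psi; field).
    rewrite cos_2a, sin_2a in E.
    destruct (b t) as [x y]. simpl in *. injection E. intros E2 E1.
    pose proof (sin2_cos2 (psi t)). unfold Rsqr in *.
    set (s := sin (psi t)) in *. set (co := cos (psi t)) in *.
    assert (Hx : x * (s*s+co*co) = x) by (rewrite H; ring).
    assert (Hy : y * (s*s+co*co) = y) by (rewrite H; ring).
    assert (A1 : s * (x * s - y * co) = 0) by nra.
    assert (A2 : co * (x * s - y * co) = 0) by nra.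
    replace (x * s - y * co) with (s * (s * (x * s - y * co)) + co * (co * (x * s - y * co)))
      by (transitivity ((x * s - y * co) * (s*s+co*co)); [ring | rewrite H; ring]).
    rewrite A1, A2; ring. }
  assert (Fc : continuity f).
  { intro t. unfold f.
    assert (C1 : continuity_pt (fun t => fst (b t)) t).
    { apply continuity_pt_filterlim. apply (continuous_comp b fst).
      apply Hb. destruct (b t); apply continuous_fst. }
    assert (C2 : continuity_pt (fun t => snd (b t)) t).
    { apply continuity_pt_filterlim. apply (continuous_comp b snd).
      apply Hb. destruct (b t); apply continuous_snd. }
    assert (C3 : continuity psi) by (unfold psi; reg).
    assert (C4 : continuity_pt (fun t => cos (psi t)) t)
      by (apply (continuity_pt_comp psi cos); [apply C3 | apply continuity_cos]).
    assert (C5 : continuity_pt (fun t => sin (psi t)) t)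
      by (apply (continuity_pt_comp psi sin); [apply C3 | apply continuity_sin]).
    apply continuity_pt_plus; apply continuity_pt_mult; assumption. }
  assert (Fp : forall t, f (t + 2 * PI / omega) = - f t).
  { intro t. unfold f. rewrite Pb.
    replace (psi (t + 2 * PI / omega)) with (psi t - PI) by (unfold psi; field; lra).
    rewrite cos_minus, sin_minus, cos_PI, sin_PI. ring. }
  assert (Tpos : 0 <= 2 * PI / omega).
  { pose proof PI_RGT_0. apply Rlt_le. apply Rdiv_lt_0_compat; lra. }
  destruct (IVT_cor f 0 (2 * PI / omega) Fc Tpos) as [t [_ Ft]].
  { replace (2 * PI / omega) with (0 + 2 * PI / omega) by ring. rewrite Fp. nra. }
  assert (B0 : b t = RtoC 0).
  { pose proof (Q0 t) as Qt. unfold f, q in *.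
    pose proof (sin2_cos2 (psi t)). unfold Rsqr in *.
    destruct (b t) as [x y]. simpl in *. unfold RtoC. f_equal; nra. }
  exists t. split; [exact B0|].
  exists (RtoC (a t)). intro mu.
  unfold M2det, M2shift, Hmat; simpl. rewrite B0. destruct (Rel t) as [Ac _]. rewrite <- Ac.
  unfold Cconj, RtoC, Cminus, Cmult, Cplus, Copp; simpl. f_equal; ring.
Qed.
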